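(* Let $\mathfrak g$ be a finite-dimensional Lie algebra over a field $\mathbb K$ of characteristic zero and $\mathfrak h\subset\mathfrak g$ a nonzero commutative ideal. Then $$\dim_{\mathbb K(\mathfrak h^* )}L_{\mathfrak h}=\dim_{\mathbb K}\mathrm{St}(h)-\dim_{\mathbb K}\mathfrak h+1,$$ where $\mathrm{St}(h)$ is the stationary subalgebra of a generic $h\in\mathfrak h^*$.
   Context: $\pi:\mathfrak g^*\to\mathfrak h^*$ is restriction. For $h\in\mathfrak h^*$, $\mathrm{St}(h)=\{\xi\in\mathfrak g\mid\langle h,[\xi,\eta]\rangle=0\ \forall\eta\in\mathfrak h\}$ (stationary subalgebra for the representation of $\mathfrak g$ on $\mathfrak h^*$ dual to $\operatorname{ad}|_{\mathfrak h}$). $\mathbb K(\mathfrak h^* )=\operatorname{Frac}S(\mathfrak h)$ is the field of rational functions on $\mathfrak h^*$. A rational section is a rational map $\Psi:\mathfrak h^*\to\mathfrak g$ with $\Psi(h)\in\mathrm{St}(h)$ for generic $h$; these form a $\mathbb K(\mathfrak h^* )$-vector space (and Lie algebra with $[\Psi_1,\Psi_2](h)=[\Psi_1(h),\Psi_2(h)]$). $L_{\mathfrak h}$ is the set of rational functions $f_\Psi(x)=\langle x,\Psi(\pi(x))\rangle$ on $\mathfrak g^*$, $\Psi$ a rational section; it is a vector space (indeed a Lie algebra under the Lie–Poisson bracket) over $\mathbb K(\mathfrak h^* )$. *)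

(* Defs.v *)
From HB Require Import structures.
From mathcomp Require Import all_boot all_order all_algebra.
From mathcomp Require Import mpoly.

Set Implicit Arguments.
Unset Strict Implicit.
Unset Printing Implicit Defensive.

Import GRing.Theory.
Local Open Scope ring_scope.
Local Notation "x %:F" := (@FracField.tofrac _ x).

(* Conventions.
   * g = K^n, elements are row vectors 'rV[K]_n; g^* = K^n with the pairing
     <x, xi> = \sum_i x_i xi_i; the coordinate functions on g^* are 'X_i.
   * h is the row space of a row-free matrix B : 'M_(m,n); its rows b_j form a
     basis of h, so dim h = m.  h^* = K^m via the dual basis: c : 'rV_m is the
     functional lambda_c with lambda_c(b_j) = c_j.  Coordinate functions on h^*
     are 'X_j, j < m, so S(h) = {mpoly K[m]} and K(h^* ) = {fraction {mpoly K[m]}}.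
   * pi : g^* -> h^* is restriction: (pi x)_j = x(b_j) = \sum_i B j i * x_i.  *)

Section LieDefs.
Variable K : fieldType.
Variables n m : nat.

Definition is_lie_bracket (br : 'rV[K]_n -> 'rV[K]_n -> 'rV[K]_n) : Prop :=
  [/\ (forall (a : K) x y z, br (a *: x + y) z = a *: br x z + br y z),
      (forall (a : K) x y z, br z (a *: x + y) = a *: br z x + br z y),
      (forall x, br x x = 0) &
      (forall x y z, br x (br y z) + br y (br z x) + br z (br x y) = 0)].

Definition is_comm_ideal (br : 'rV[K]_n -> 'rV[K]_n -> 'rV[K]_n)
  (B : 'M[K]_(m, n)) : Prop :=
  (forall xi eta, (eta <= B)%MS -> (br xi eta <= B)%MS) /\
  (forall eta1 eta2, (eta1 <= B)%MS -> (eta2 <= B)%MS -> br eta1 eta2 = 0).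

(* value of the functional c in h^* on an element v of h *)
Definition hpair (B : 'M[K]_(m, n)) (c : 'rV[K]_m) (v : 'rV[K]_n) : K :=
  \sum_(j < m) (v *m pinvmx B) 0 j * c 0 j.

Definition St (br : 'rV[K]_n -> 'rV[K]_n -> 'rV[K]_n) (B : 'M[K]_(m, n))
  (c : 'rV[K]_m) (xi : 'rV[K]_n) : Prop :=
  forall eta, (eta <= B)%MS -> hpair B c (br xi eta) = 0.

Definition has_dim (P : 'rV[K]_n -> Prop) (s : nat) : Prop :=
  exists S : 'M[K]_(s, n), row_free S /\ forall v, P v <-> (v <= S)%MS.

Definition evh (p : {mpoly K[m]}) (c : 'rV[K]_m) : K := p.@[fun j => c 0 j].

(* s is the dimension of St(h) for generic h in h^*: it holds on the nonempty
   Zariski open set {p <> 0}, for some nonzero polynomial p *)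
Definition generic_St_dim br B (s : nat) : Prop :=
  exists p : {mpoly K[m]}, p != 0 /\
    forall c : 'rV[K]_m, evh p c != 0 -> has_dim (St br B c) s.

(* A rational map Psi : h^* -> g is given by polynomial numerators P_i and a
   nonzero common denominator q:  Psi(c) = (P_i(c) / q(c))_i. *)
Definition ratmap_eval (P : 'I_n -> {mpoly K[m]}) (q : {mpoly K[m]})
  (c : 'rV[K]_m) : 'rV[K]_n := \row_i (evh (P i) c / evh q c).

Definition rational_section br B (P : 'I_n -> {mpoly K[m]}) (q : {mpoly K[m]})
  : Prop :=
  q != 0 /\ exists p : {mpoly K[m]}, p != 0 /\
    forall c : 'rV[K]_m, evh p c != 0 ->
      evh q c != 0 /\ St br B c (ratmap_eval P q c).

Definition pullpoly (B : 'M[K]_(m, n)) (p : {mpoly K[m]}) : {mpoly K[n]} :=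
  comp_mpoly [tuple \sum_(i < n) B j i *: 'X_i | j < m] p.

Definition KH := {fraction {mpoly K[m]}}.
Definition KG := {fraction {mpoly K[n]}}.

Definition pullfrac (B : 'M[K]_(m, n)) (f : KH) : KG :=
  (pullpoly B (\n_(repr f)))%:F / (pullpoly B (\d_(repr f)))%:F.

(* f_Psi(x) = <x, Psi(pi x)> as an element of K(g^* ) *)
Definition fPsi B (P : 'I_n -> {mpoly K[m]}) (q : {mpoly K[m]}) : KG :=
  (\sum_(i < n) 'X_i * pullpoly B (P i))%:F / (pullpoly B q)%:F.

Definition Lh br B (f : KG) : Prop :=
  exists P q, rational_section br B P q /\ f = fPsi B P q.

(* L_h has dimension d over K(h^* ), which acts on K(g^* ) through pi:
   it has a K(h^* )-basis of d elements. *)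
Definition Lh_has_dim br B (d : nat) : Prop :=
  exists fs : 'I_d -> KG,
    (forall k, Lh br B (fs k)) /\
    (forall a : 'I_d -> KH,
        \sum_(k < d) pullfrac B (a k) * fs k = 0 -> forall k, a k = 0) /\
    (forall f, Lh br B f ->
        exists a : 'I_d -> KH, f = \sum_(k < d) pullfrac B (a k) * fs k).

End LieDefs.

(* Main.v *)
Require Import Defs.
From HB Require Import structures.
From mathcomp Require Import all_boot all_order all_algebra.
From mathcomp Require Import mpoly.
From Stdlib Require Import Classical.
From mathcomp Require Import ring.
Set Implicit Arguments. Unset Strict Implicit. Unset Printing Implicit Defensive.
Import GRing.Theory.
Local Open Scope ring_scope.
Local Notation "x %:F" := (@FracField.tofrac _ x).
Lemma pi_den (R : idomainType) (x : {ratio R}) :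
  ((\pi_{fraction R})%qT x) * (\d_x)%:F = (\n_x)%:F.
Proof.
unlock FracField.tofrac.
have -> : (\pi_{fraction R})%qT x * (\pi_{fraction R})%qT (Ratio \d_x 1)
   = (\pi_{fraction R})%qT (FracField.mulf x (Ratio \d_x 1)).
  by rewrite FracField.pi_mul.
apply/eqmodP => /=.
rewrite FracField.equivfE /FracField.mulf.
rewrite !numden_Ratio ?oner_neq0 //; last by rewrite mulr1 denom_ratioP.
by rewrite !mulr1 mulrC.
by rewrite mulr1 denom_ratioP.
Qed.

Lemma fracE (R : idomainType) (f : {fraction R}) :
  f = (\n_(repr f))%:F / (\d_(repr f))%:F.
Proof.
have hd : (\d_(repr f))%:F != 0 by rewrite tofrac_eq0; exact: denom_ratioP.
apply: (canRL (mulfK hd)).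
by rewrite -pi_den reprK.
Qed.

Section Ident.
Variable (R : idomainType).

Definition rst n (m : 'X_{1..n.+1}) : 'X_{1..n} :=
  [multinom m (widen_ord (leqnSn n) i) | i < n].

Lemma rst_inj n (m1 m2 : 'X_{1..n.+1}) :
  m1 ord_max = m2 ord_max -> rst m1 = rst m2 -> m1 = m2.
Proof.
move=> hmax /mnmP hr; apply/mnmP => i.
case: (ltnP i n) => [lt|ge].
  have := hr (Ordinal lt); rewrite !mnmE.
  by have -> : widen_ord (leqnSn n) (Ordinal lt) = i by apply: val_inj.
have -> : i = ord_max by apply: val_inj => /=; apply/eqP; rewrite eqn_leq ge -ltnS ltn_ord.
exact: hmax.
Qed.

Lemma muni_coef n (p : {mpoly R[n.+1]}) k m' :
  ((muni p)`_k)@_m' = \sum_(m <- msupp p | m ord_max == k) p@_m * (rst m == m')%:R.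
Proof.
rewrite muniE coef_sumMXn raddf_sum /=.
by apply: eq_bigr => m _; rewrite mcoeffZ mcoeffX.
Qed.

Lemma muni_eq0 n (p : {mpoly R[n.+1]}) : muni p = 0 -> p = 0.
Proof.
move=> h; apply/eqP; apply/negPn/negP => pn0.
have [m0 hm0] : exists m0, m0 \in msupp p.
  case E: (msupp p) => [|a s]; last by exists a; rewrite inE eqxx.
  by move: pn0; rewrite -msupp_eq0 E.
have := muni_coef p (m0 ord_max) (rst m0).
rewrite h coef0 mcoeff0.
rewrite big_mkcond (bigD1_seq m0) //= ?eqxx ?mulr1.
rewrite big1 ?addr0; last first.
  move=> m hne; case: eqP => [hmax|//]; case: eqP => [hr|]; last by rewrite mulr0.
  by case/eqP: hne; apply: rst_inj.
by move/esym/eqP; rewrite mcoeff_eq0 hm0.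
Qed.
Lemma muni_eval n (p : {mpoly R[n.+1]}) (v : 'I_n.+1 -> R) :
  p.@[v] = (map_poly (meval (fun j : 'I_n => v (widen_ord (leqnSn n) j))) (muni p)).[v ord_max].
Proof.
rewrite muniE rmorph_sum horner_sum mevalE.
apply: eq_bigr => m _.
rewrite -mul_polyC rmorphM /= map_polyC map_polyXn hornerCM hornerXn.
rewrite /= mevalZ mevalX.
rewrite big_ord_recr /= mulrA; congr (_ * _ * _).
by apply: eq_bigr => i _; rewrite mnmE.
Qed.
Lemma poly_nz_point (f : nat -> R) (finj : injective f) (u : {poly R}) :
  u != 0 -> exists t, u.[t] != 0.
Proof.
move=> u0; case: (classic (exists t, u.[t] != 0)) => // hnone; exfalso.
have hall : forall t, u.[t] == 0 by move=> t; apply/negPn/negP => h; apply: hnone; exists t.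
have := max_poly_roots u0 (rs := map f (iota 0 (size u))).
rewrite size_map size_iota ltnn => H; suff: false by []; apply: H; last by rewrite map_inj_uniq ?iota_uniq.
by apply/allP => x /mapP [k _ ->]; apply/rootP/eqP/hall.
Qed.

Lemma mpoly0var (p : {mpoly R[0]}) : p = (p@_0%MM)%:MP.
Proof.
apply/mpolyP => m; rewrite mcoeffC.
have -> : m = 0%MM by apply/mnmP => -[].
by rewrite eqxx mulr1.
Qed.

Lemma mpoly_nz_point (f : nat -> R) (finj : injective f) n (p : {mpoly R[n]}) :
  p != 0 -> exists v, p.@[v] != 0.
Proof.
elim: n p => [|n IH] p pn0.
  exists (fun i => f 0); rewrite [p]mpoly0var mevalC.
  by apply: contraNneq pn0 => h; rewrite [p]mpoly0var h.
have qn0 : muni p != 0 by apply: contra_neq pn0; exact: muni_eq0.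
have lcn0 : lead_coef (muni p) != 0 by rewrite lead_coef_eq0.
have [v' hv'] := IH _ lcn0.
set u := map_poly (meval v') (muni p).
have un0 : u != 0.
  by rewrite -lead_coef_eq0 /u lead_coef_map_eq.
have [t ht] := poly_nz_point finj un0.

exists (fun i : 'I_n.+1 => match unlift ord_max i with Some j => v' j | None => t end).
rewrite muni_eval unlift_none.
rewrite (@eq_map_poly _ _ _ (meval v')) //.
move=> q; apply: meval_eq => j.
have -> : widen_ord (leqnSn n) j = lift ord_max j by apply: val_inj; rewrite /= /bump leqNgt ltn_ord.
by rewrite liftK.
Qed.
End Ident.
Section PartA.
Variables (K : fieldType) (n m : nat) (br : 'rV[K]_n -> 'rV[K]_n -> 'rV[K]_n)
  (B : 'M[K]_(m, n)).
Hypothesis hlie : is_lie_bracket br.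

Lemma br0l z : br 0 z = 0.
Proof.
case: hlie => h1 _ _ _.
by have := h1 (-1) 0 0 z; rewrite scaler0 addr0 scaleN1r addNr.
Qed.
Lemma br0r z : br z 0 = 0.
Proof.
case: hlie => _ h2 _ _.
by have := h2 (-1) 0 0 z; rewrite scaler0 addr0 scaleN1r addNr.
Qed.

Lemma br_suml (I : Type) (r : seq I) (a : I -> K) (x : I -> 'rV_n) z :
  br (\sum_(i <- r) a i *: x i) z = \sum_(i <- r) a i *: br (x i) z.
Proof.
case: hlie => h1 _ _ _.
elim/big_rec2: _ => [|i y1 y2 _ <-]; first exact: br0l.
by rewrite h1.
Qed.
Lemma br_sumr (I : Type) (r : seq I) (a : I -> K) (x : I -> 'rV_n) z :
  br z (\sum_(i <- r) a i *: x i) = \sum_(i <- r) a i *: br z (x i).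
Proof.
case: hlie => _ h2 _ _.
elim/big_rec2: _ => [|i y1 y2 _ <-]; first exact: br0r.
by rewrite h2.
Qed.

Lemma hpairE c v : hpair B c v = (v *m (pinvmx B *m c^T)) 0 0.
Proof.
rewrite mulmxA mxE /hpair; apply: eq_bigr => j _; by rewrite [c^T j 0]mxE.
Qed.

Lemma hpair_sum (I : Type) (r : seq I) (a : I -> K) (x : I -> 'rV_n) c :
  hpair B c (\sum_(i <- r) a i *: x i) = \sum_(i <- r) a i * hpair B c (x i).
Proof.
rewrite hpairE mulmx_suml summxE; apply: eq_bigr => i _.
by rewrite -scalemxAl mxE hpairE.
Qed.

Definition Mp : 'M[{mpoly K[m]}]_(n, m) :=
  \matrix_(i, j) \sum_(k < m) ((br (delta_mx 0 i) (row j B) *m pinvmx B) 0 k) *: 'X_k.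

Definition evM (c : 'rV[K]_m) : 'M[K]_(n, m) := map_mx (fun p : {mpoly K[m]} => evh p c) Mp.

Lemma evME c i j : evM c i j = hpair B c (br (delta_mx 0 i) (row j B)).
Proof.
rewrite !mxE /evh raddf_sum /hpair; apply: eq_bigr => k _.
by rewrite /= mevalZ mevalXU.
Qed.

Lemma mulevM c xi j : (xi *m evM c) 0 j = hpair B c (br xi (row j B)).
Proof.
rewrite mxE {2}(row_sum_delta xi) br_suml hpair_sum.
by apply: eq_bigr => i _; rewrite evME.
Qed.

Lemma St_ker c xi : St br B c xi <-> xi *m evM c = 0.
Proof.
split.
  move=> h; apply/rowP => j; rewrite mulevM mxE h //; exact: row_sub.
move=> h eta heta.
rewrite -(mulmxKpV heta) mulmx_sum_row br_sumr hpair_sum big1 // => j _.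
by rewrite -mulevM h [X in _ * X]mxE mulr0.
Qed.

End PartA.
Section Minors.
Variable F : fieldType.

Lemma rank_mxsub p q k l (f : 'I_k -> 'I_p) (g : 'I_l -> 'I_q) (A : 'M[F]_(p, q)) :
  (\rank (mxsub f g A) <= \rank A)%N.
Proof.
rewrite -[A in mxsub _ _ A]mulmx1 mxsub_mul (leq_trans (mxrankM_maxl _ _)) //.
by rewrite rowsubE mxrankM_maxr.
Qed.

Lemma rank_minor p q k (f : 'I_k -> 'I_p) (g : 'I_k -> 'I_q) (A : 'M[F]_(p, q)) :
  \det (mxsub f g A) != 0 -> (k <= \rank A)%N.
Proof.
move=> hd; rewrite -[k](@mxrank_unit _ _ (mxsub f g A)) ?rank_mxsub //.
by rewrite unitmxE unitfE.
Qed.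

Lemma minor_of_rank p q (A : 'M[F]_(p, q)) :
  exists f : 'I_(\rank A) -> 'I_p, exists g : 'I_(\rank A) -> 'I_q,
    \det (mxsub f g A) != 0.
Proof.
set f := maxrankfun A.
set A1 := rowsub f A.
have hA1 : row_free A1 := maxrowsub_free A.
have hfull : row_full A1^T by rewrite /row_full mxrank_tr.
set g := fullrankfun hfull.
exists f, g.
have := fullrowsub_unit hfull; rewrite unitmxE unitfE -/g.
suff -> : rowsub g A1^T = (mxsub f g A)^T by rewrite det_tr.
by apply/matrixP => i j; rewrite !mxE.
Qed.
End Minors.

Section Poly.
Variables (K : fieldType) (m : nat).

Lemma evh_det k (A : 'M[{mpoly K[m]}]_k) c :
  evh (\det A) c = \det (map_mx (fun x => evh x c) A).
Proof. by rewrite /evh -det_map_mx. Qed.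

Lemma tofrac_det k (A : 'M[{mpoly K[m]}]_k) :
  (\det A)%:F = \det (map_mx (@FracField.tofrac _) A).
Proof. by rewrite -det_map_mx. Qed.

Lemma map_mxsub (T1 T2 : Type) (h : T1 -> T2) p q k l (f : 'I_k -> 'I_p) (g : 'I_l -> 'I_q)
  (A : 'M[T1]_(p, q)) : map_mx h (mxsub f g A) = mxsub f g (map_mx h A).
Proof. by apply/matrixP => i j; rewrite !mxE. Qed.
End Poly.
Section Generic.
Variables (K : fieldType) (m : nat).
Hypothesis hK : [pchar K] =i pred0.

Lemma natr_inj : injective (fun k : nat => (k%:R : K)).
Proof.
have h0 := (pcharf0P K).1 hK.
move=> k1 k2 /= e; wlog le : k1 k2 e / (k1 <= k2)%N.
  by move=> W; case: (leqP k1 k2) => [l|/ltnW l]; [apply: W | apply/esym/W].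
have : ((k2 - k1)%:R : K) == 0 by rewrite natrB // e subrr.
by rewrite h0 subn_eq0 => l2; apply/eqP; rewrite eqn_leq le l2.
Qed.

Lemma evhM (p q : {mpoly K[m]}) c : evh (p * q) c = evh p c * evh q c.
Proof. by rewrite /evh mevalM. Qed.

Lemma exists_point (p : {mpoly K[m]}) : p != 0 -> exists c : 'rV[K]_m, evh p c != 0.
Proof.
move=> pn0; have [v hv] := mpoly_nz_point natr_inj pn0.
exists (\row_j v j); rewrite /evh (@meval_eq _ _ _ v) // => j; by rewrite mxE.
Qed.

Lemma poly_zero_generic (p Q : {mpoly K[m]}) :
  p != 0 -> (forall c, evh p c != 0 -> evh Q c = 0) -> Q = 0.
Proof.
move=> pn0 h; apply/eqP/negPn/negP => Qn0.
have [c hc] := exists_point (mulf_neq0 Qn0 pn0).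
move: hc; rewrite evhM mulf_eq0 negb_or => /andP[hQ hp].
by move: hQ; rewrite (h c hp) eqxx.
Qed.

Lemma two_generic (p1 p2 : {mpoly K[m]}) : p1 != 0 -> p2 != 0 ->
  exists c, evh p1 c != 0 /\ evh p2 c != 0.
Proof.
move=> h1 h2; have [c hc] := exists_point (mulf_neq0 h1 h2).
by exists c; move: hc; rewrite evhM mulf_eq0 negb_or => /andP.
Qed.
End Generic.

Section PartD.
Variables (K : fieldType) (n m : nat) (br : 'rV[K]_n -> 'rV[K]_n -> 'rV[K]_n)
  (B : 'M[K]_(m, n)).
Hypothesis hlie : is_lie_bracket br.

Lemma St_kerP c v : St br B c v <-> (v <= kermx (evM br B c))%MS.
Proof. by rewrite sub_kermx St_ker //; split => [->|/eqP]. Qed.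

Lemma rank_hd c r : \rank (evM br B c) = r -> has_dim (St br B c) (n - r).
Proof.
move=> hr.
have e : \rank (kermx (evM br B c)) = (n - r)%N by rewrite mxrank_ker hr.
exists (castmx (e, erefl n) (row_base (kermx (evM br B c)))); split.
  by rewrite row_free_castmx row_base_free.
move=> v; rewrite St_kerP (eqmx_cast _ _) eq_row_base; split => //.
Qed.

Lemma hd_rank c s : has_dim (St br B c) s -> \rank (evM br B c) = (n - s)%N /\ (s <= n)%N.
Proof.
case=> S [fS hS].
have eS : (S :=: kermx (evM br B c))%MS.
  apply/eqmxP/andP; split; apply/row_subP => i.
    by apply/St_kerP/hS; exact: row_sub.
  by apply/hS/St_kerP; exact: row_sub.
have : \rank S = s by apply/eqP.
rewrite eS mxrank_ker => <-; split; last exact: leq_subr.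
by rewrite subKn // rank_leq_row.
Qed.

Lemma max_rank : exists r, (exists c, \rank (evM br B c) = r) /\
  forall c, (\rank (evM br B c) <= r)%N.
Proof.
suff : forall N, (forall c, (\rank (evM br B c) <= N)%N) ->
  exists r, (exists c, \rank (evM br B c) = r) /\ forall c, (\rank (evM br B c) <= r)%N.
  by apply => c; exact: rank_leq_row.
elim => [|N IH] hN.
  exists 0%N; split => // ; exists 0; by apply/eqP; rewrite -leqn0.
case: (classic (exists c, \rank (evM br B c) = N.+1)) => [h|h].
  by exists N.+1.
apply: IH => c; have := hN c; rewrite leq_eqVlt ltnS => /orP[/eqP e|//].
by exfalso; apply: h; exists c.
Qed.

Lemma part1 : exists s, generic_St_dim br B s.
Proof.
have [r [[c0 hc0] hle]] := max_rank.
have [f [g hfg]] := minor_of_rank (evM br B c0).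
set D := \det (mxsub f g (Mp br B)).
have hD c : evh D c = \det (mxsub f g (evM br B c)).
  by rewrite /D evh_det map_mxsub.
exists (n - \rank (evM br B c0))%N, D; split.
  by apply: contraNneq hfg => h; rewrite -hD h /evh meval0.
move=> c hc; apply: rank_hd.
apply/eqP; rewrite eqn_leq; apply/andP; split.
  by rewrite hc0 hle.
by apply: (rank_minor (f:=f) (g:=g)); rewrite -hD.
Qed.
End PartD.

Section PartE.
Variables (K : fieldType) (n m : nat) (B : 'M[K]_(m, n)).
Hypothesis hK : [pchar K] =i pred0.
Hypothesis hB : row_free B.

Local Notation pull := (pullpoly B).

Lemma pullD p q : pull (p + q) = pull p + pull q. Proof. exact: rmorphD. Qed.
Lemma pullM p q : pull (p * q) = pull p * pull q. Proof. exact: rmorphM. Qed.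
Lemma pull1 : pull 1 = 1. Proof. exact: rmorph1. Qed.
Lemma pullC c : pull c%:MP = c%:MP. Proof. exact: comp_mpolyC. Qed.
Lemma pullX j : pull 'X_j = \sum_(i < n) B j i *: 'X_i.
Proof. by rewrite /pullpoly comp_mpolyXU -tnth_nth tnth_mktuple. Qed.

Lemma pull_eval p (x : 'I_n -> K) :
  (pull p).@[x] = p.@[fun j => \sum_(i < n) B j i * x i].
Proof.
rewrite /pullpoly comp_mpoly_meval; apply: meval_eq => j.
rewrite tnth_mktuple raddf_sum; apply: eq_bigr => i _.
by rewrite /= mevalZ mevalXU.
Qed.

Lemma B_surj (c : 'rV[K]_m) : exists x : 'rV[K]_n,
  forall j, \sum_(i < n) B j i * x 0 i = c 0 j.
Proof.
have hc : (c <= B^T)%MS by apply: submx_full; rewrite /row_full mxrank_tr; exact: hB.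
exists (c *m pinvmx B^T) => j.
rewrite -{2}(mulmxKpV hc) [RHS]mxE; apply: eq_bigr => i _.
by rewrite [B^T i j]mxE mulrC.
Qed.

Lemma pull_inj q : pull q = 0 -> q = 0.
Proof.
move=> h; apply: (@poly_zero_generic _ _ hK 1) => [|c _]; first exact: oner_neq0.
have [x hx] := B_surj c.
have := congr1 (meval (fun i => x 0 i)) h.
rewrite pull_eval meval0 /evh => <-; apply: meval_eq => j; by rewrite hx.
Qed.

Lemma pull_neq0 q : q != 0 -> pull q != 0.
Proof. by move=> qn0; apply: contra_neq qn0; exact: pull_inj. Qed.

Lemma tofrac_neq0 (R : idomainType) (q : R) : q != 0 -> q%:F != 0.
Proof. by rewrite tofrac_eq0. Qed.

Lemma frac_ratio (f : KH K m) : exists a d : {mpoly K[m]}, d != 0 /\ f = a%:F / d%:F.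
Proof.
exists (\n_(repr f)), (\d_(repr f)); split; first exact: denom_ratioP.
exact: fracE.
Qed.

Lemma pullfrac_frac (a d : {mpoly K[m]}) : d != 0 ->
  pullfrac B (a%:F / d%:F) = (pull a)%:F / (pull d)%:F.
Proof.
move=> dn0; rewrite /pullfrac.
set f := a%:F / d%:F.
have d0n0 : \d_(repr f) != 0 := denom_ratioP _.
have e := fracE f.
have e2 : a * \d_(repr f) = \n_(repr f) * d.
  apply/eqP; rewrite -tofrac_eq !tofracM; apply/eqP.
  move: e; rewrite {1}/f => /eqP; rewrite eqr_div ?tofrac_neq0 //.
  by move/eqP.
apply/eqP; rewrite eqr_div ?tofrac_neq0 ?pull_neq0 //.
by rewrite -!tofracM -!pullM e2.
Qed.

Lemma add_frac (F : fieldType) (a b c d : F) : b != 0 -> d != 0 ->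
  a / b + c / d = (a * d + c * b) / (b * d).
Proof. by move=> hb hd; field; rewrite hb hd. Qed.
Lemma mul_frac (F : fieldType) (a b c d : F) :
  a / b * (c / d) = (a * c) / (b * d).
Proof. by rewrite invfM mulrACA. Qed.

Lemma pullfracD f g : pullfrac B (f + g) = pullfrac B f + pullfrac B g.
Proof.
have [a1 [d1 [h1 ->]]] := frac_ratio f.
have [a2 [d2 [h2 ->]]] := frac_ratio g.
have -> : a1%:F / d1%:F + a2%:F / d2%:F = (a1 * d2 + a2 * d1)%:F / (d1 * d2)%:F.
  by rewrite tofracD !tofracM add_frac ?tofrac_neq0.
rewrite !pullfrac_frac ?mulf_neq0 // pullD !pullM tofracD !tofracM.
by rewrite add_frac ?tofrac_neq0 ?pull_neq0.
Qed.

Lemma pullfracM f g : pullfrac B (f * g) = pullfrac B f * pullfrac B g.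
Proof.
have [a1 [d1 [h1 ->]]] := frac_ratio f.
have [a2 [d2 [h2 ->]]] := frac_ratio g.
have -> : a1%:F / d1%:F * (a2%:F / d2%:F) = (a1 * a2)%:F / (d1 * d2)%:F.
  by rewrite !tofracM mul_frac.
rewrite !pullfrac_frac ?mulf_neq0 // !pullM !tofracM.
by rewrite mul_frac.
Qed.

Lemma pullfrac_tofrac a : pullfrac B a%:F = (pull a)%:F.
Proof.
rewrite -[a%:F]divr1 -tofrac1 pullfrac_frac ?oner_neq0 //.
by rewrite pull1 tofrac1 divr1.
Qed.

Lemma pullfrac0 : pullfrac B 0 = 0.
Proof. by rewrite -tofrac0 pullfrac_tofrac /pullpoly comp_mpoly0 tofrac0. Qed.

Lemma pullfrac_eq0 f : pullfrac B f = 0 -> f = 0.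
Proof.
have [a [d [h ->]]] := frac_ratio f.
rewrite pullfrac_frac // => /eqP; rewrite mulf_eq0 invr_eq0 !tofrac_eq0.
rewrite (negbTE (pull_neq0 h)) orbF => /eqP /pull_inj ->.
by rewrite tofrac0 mul0r.
Qed.

Lemma pullfrac_sum (I : Type) (r : seq I) (a : I -> KH K m) :
  pullfrac B (\sum_(i <- r) a i) = \sum_(i <- r) pullfrac B (a i).
Proof.
elim/big_rec2: _ => [|i y1 y2 _ <-]; first exact: pullfrac0.
exact: pullfracD.
Qed.
End PartE.

Definition fK (K : fieldType) (m : nat) (k : K) : KH K m := (k%:MP)%:F.
HB.instance Definition _ (K : fieldType) (m : nat) :=
  GRing.RMorphism.copy (@fK K m) ((@FracField.tofrac _) \o (@mpolyC m K)).

Lemma frac_scale (F : fieldType) (a b c : F) : c != 0 -> a / b = (a * c) / (b * c).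
Proof. by move=> hc; rewrite invfM mulrACA divff // mulr1. Qed.

Section PartF.
Variables (K : fieldType) (n m : nat) (br : 'rV[K]_n -> 'rV[K]_n -> 'rV[K]_n)
  (B : 'M[K]_(m, n)).
Hypothesis hK : [pchar K] =i pred0.
Hypothesis hlie : is_lie_bracket br.
Hypothesis hB : row_free B.

Local Notation pull := (pullpoly B).
Local Notation F := (KH K m).

Definition MF : 'M[F]_(n, m) := map_mx (@FracField.tofrac _) (Mp br B).
Definition BF : 'M[F]_(m, n) := map_mx (@fK K m) B.

Definition fF (V : 'rV[F]_n) : KG K n :=
  \sum_(i < n) ('X_i)%:F * pullfrac B (V 0 i).

Lemma fF_lin a V W : fF (a *: V + W) = pullfrac B a * fF V + fF W.
Proof.
rewrite /fF mulr_sumr -big_split /=; apply: eq_bigr => i _.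
by rewrite !mxE pullfracD // pullfracM // mulrDr mulrCA.
Qed.

Lemma fF0 : fF 0 = 0.
Proof. by rewrite /fF big1 // => i _; rewrite mxE pullfrac0 // mulr0. Qed.

Lemma fF_sum (I : Type) (r : seq I) (a : I -> F) (V : I -> 'rV[F]_n) :
  fF (\sum_(k <- r) a k *: V k) = \sum_(k <- r) pullfrac B (a k) * fF (V k).
Proof.
elim/big_rec2: _ => [|i y1 y2 _ <-]; first exact: fF0.
exact: fF_lin.
Qed.

Definition rowfrac (P : 'I_n -> {mpoly K[m]}) q : 'rV[F]_n := \row_i ((P i)%:F / q%:F).

Lemma fPsi_fF P q : q != 0 -> fPsi B P q = fF (rowfrac P q).
Proof.
move=> qn0; rewrite /fPsi /fF rmorph_sum mulr_suml; apply: eq_bigr => i _.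
by rewrite /rowfrac mxE pullfrac_frac // rmorphM mulrA.
Qed.

Lemma clear_den (V : 'rV[F]_n) : exists P q, q != 0 /\ V = rowfrac P q.
Proof.
pose d i := \d_(repr (V 0 i)).
have dn0 i : d i != 0 by exact: denom_ratioP.
exists (fun i => \n_(repr (V 0 i)) * \prod_(k | k != i) d k), (\prod_k d k); split.
  by rewrite prodf_seq_neq0; apply/allP => k _; rewrite dn0.
apply/rowP => i; rewrite mxE [X in _ / X%:F](bigD1 i) //=.
have e := fracE (V 0 i); rewrite {1}e -/(d i).
rewrite !tofracM -frac_scale //.
by rewrite tofrac_neq0 // prodf_seq_neq0; apply/allP => k _; rewrite dn0 implybT.
Qed.

Lemma rowfracM (P : 'I_n -> {mpoly K[m]}) q p (M : 'M[{mpoly K[m]}]_(n, p)) l :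
  q != 0 ->
  (rowfrac P q *m map_mx (@FracField.tofrac _) M) 0 l =
    (\sum_i P i * M i l)%:F / q%:F.
Proof.
move=> qn0; rewrite mxE rmorph_sum mulr_suml; apply: eq_bigr => i _.
by rewrite !mxE rmorphM mulrAC.
Qed.

Lemma ratmapM (P : 'I_n -> {mpoly K[m]}) q c l :
  (ratmap_eval P q c *m evM br B c) 0 l =
    evh (\sum_i P i * Mp br B i l) c / evh q c.
Proof.
rewrite mxE /evh raddf_sum mulr_suml; apply: eq_bigr => i _.
by rewrite !mxE /= mevalM mulrAC.
Qed.

Lemma sec_ker P q : rational_section br B P q -> rowfrac P q *m MF = 0.
Proof.
case=> qn0 [p [pn0 hp]]; apply/rowP => l; rewrite /MF rowfracM // mxE.
suff -> : \sum_i P i * Mp br B i l = 0 by rewrite tofrac0 mul0r.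
apply: (poly_zero_generic hK pn0) => c hc.
have [hq hSt] := hp c hc.
move/(St_ker B hlie): hSt => /rowP /(_ l); rewrite ratmapM mxE => /eqP.
by rewrite mulf_eq0 invr_eq0 (negbTE hq) orbF => /eqP.
Qed.

Lemma ker_sec V : V *m MF = 0 -> exists P q, rational_section br B P q /\ fF V = fPsi B P q.
Proof.
move=> hV; have [P [q [qn0 eV]]] := clear_den V; subst V.
exists P, q; split; last by rewrite fPsi_fF.
have hQ l : \sum_i P i * Mp br B i l = 0.
  move: hV => /rowP /(_ l); rewrite /MF rowfracM // mxE => /eqP.
  rewrite mulf_eq0 invr_eq0 !tofrac_eq0 (negbTE qn0) orbF => /eqP //.
split => //; exists q; split => // c hc; split => //.
apply/(St_ker B hlie)/rowP => l; by rewrite ratmapM hQ /evh meval0 mul0r mxE.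
Qed.

Lemma Lh_ker f : Lh br B f <-> exists V, V *m MF = 0 /\ f = fF V.
Proof.
split.
  case=> P [q [hs ->]]; exists (rowfrac P q); split; first exact: sec_ker.
  by rewrite fPsi_fF //; case: hs.
by case=> V [hV ->]; have [P [q [hs he]]] := ker_sec hV; exists P, q.
Qed.

Lemma mpolyXU_neq0 j : ('X_j : {mpoly K[m]}) != 0.
Proof.
apply/eqP => /(congr1 (mcoeff U_(j))); rewrite mcoeffXU eqxx mcoeff0 => /eqP.
by rewrite oner_eq0.
Qed.

Lemma fF_rowBF j : fF (row j BF) = (pull 'X_j)%:F.
Proof.
rewrite /fF pullX rmorph_sum; apply: eq_bigr => i _.
rewrite !mxE /fK (pullfrac_tofrac hK hB) pullC -rmorphM /=; congr (_%:F).
by rewrite mulrC mul_mpolyC.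
Qed.

Lemma fF_ker V : fF V = 0 -> (V <= BF)%MS.
Proof.
have [P [q [qn0 eV]]] := clear_den V; subst V.
rewrite -fPsi_fF // /fPsi => /eqP; rewrite mulf_eq0 invr_eq0 !tofrac_eq0.
rewrite (negbTE (pull_neq0 hK hB qn0)) orbF => /eqP hN.
have hx (x : 'I_n -> K) :
    \sum_i x i * (P i).@[fun j => \sum_k B j k * x k] = 0.
  transitivity (meval x (\sum_i 'X_i * pull (P i))); last by rewrite hN meval0.
  by rewrite raddf_sum; apply: eq_bigr => i _; rewrite /= mevalM mevalXU pull_eval.
have pw (c : 'rV[K]_m) l : \sum_i evh (P i) c * cokermx B i l = 0.
  have [x0 hx0] := B_surj hB c.
  have h1 := hx (fun i => x0 0 i).
  have h2 := hx (fun i => x0 0 i + cokermx B i l).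
  have ec j : \sum_k B j k * (x0 0 k + cokermx B k l) = c 0 j.
    rewrite -[RHS]addr0 -(hx0 j); under eq_bigr do rewrite mulrDr.
    rewrite big_split /=; congr (_ + _).
    by have := congr1 (fun M : 'M[K]_(m, n) => M j l) (mulmx_coker B); rewrite !mxE.
  have ev i : (P i).@[fun j => \sum_k B j k * (x0 0 k + cokermx B k l)] = evh (P i) c.
    by apply: meval_eq => j; rewrite ec.
  have ev0 i : (P i).@[fun j => \sum_k B j k * x0 0 k] = evh (P i) c.
    by apply: meval_eq => j; rewrite hx0.
  move: h2; under eq_bigr do rewrite ev; move=> h2.
  move: h1; under eq_bigr do rewrite ev0; move=> h1.
  move: h2; under eq_bigr do rewrite mulrDl; rewrite big_split /= h1 add0r => h2.
  by rewrite -[RHS]h2; apply: eq_bigr => i _; rewrite mulrC.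
rewrite submxE /BF -map_cokermx.
have -> : map_mx (@fK K m) (cokermx B) =
    map_mx (@FracField.tofrac _) (map_mx (@mpolyC m K) (cokermx B)).
  by apply/matrixP => i j; rewrite !mxE.
apply/eqP/rowP => l; rewrite rowfracM // mxE.
suff -> : \sum_i P i * (map_mx (@mpolyC m K) (cokermx B)) i l = 0.
  by rewrite rmorph0 mul0r.
apply: (poly_zero_generic hK (oner_neq0 _)) => c _.
rewrite /evh raddf_sum -[RHS](pw c l); apply: eq_bigr => i _.
by rewrite mxE /= mevalM mevalC.
Qed.

Hypothesis hI : is_comm_ideal br B.

Lemma hpair0 c : hpair B c 0 = 0.
Proof. by rewrite hpairE mul0mx mxE. Qed.

Lemma BF_ker : BF *m MF = 0.
Proof.
apply/matrixP => j l; rewrite !mxE.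
have -> : \sum_i BF j i * MF i l = (\sum_i (B j i)%:MP * Mp br B i l)%:F.
  by rewrite rmorph_sum; apply: eq_bigr => i _; rewrite !mxE rmorphM.
suff -> : \sum_i (B j i)%:MP * Mp br B i l = 0 by rewrite rmorph0.
apply: (poly_zero_generic hK (oner_neq0 _)) => c _.
have := mulevM B hlie c (row j B) l.
case: hI => _ hc; rewrite hc ?row_sub // hpair0 => <-.
rewrite /evh raddf_sum mxE; apply: eq_bigr => i _.
by rewrite /= mevalM mevalC !mxE.
Qed.


Lemma minorF k (f : 'I_k -> 'I_n) (g : 'I_k -> 'I_m) :
  \det (mxsub f g MF) = (\det (mxsub f g (Mp br B)))%:F.
Proof. by rewrite /MF -map_mxsub det_map_mx. Qed.

Lemma minorE k (f : 'I_k -> 'I_n) (g : 'I_k -> 'I_m) c :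
  evh (\det (mxsub f g (Mp br B))) c = \det (mxsub f g (evM br B c)).
Proof. by rewrite evh_det map_mxsub. Qed.

Lemma rank_MF s p0 : p0 != 0 ->
  (forall c, evh p0 c != 0 -> has_dim (St br B c) s) ->
  \rank MF = (n - s)%N /\ (s <= n)%N.
Proof.
move=> p0n0 hgen.
have [c1 hc1] := exists_point hK p0n0.
have [hr1 hsn] := hd_rank hlie (hgen _ hc1).
split => //.
apply/eqP; rewrite eqn_leq; apply/andP; split.
  have [f [g hfg]] := minor_of_rank MF.
  set D := \det (mxsub f g (Mp br B)).
  have Dn0 : D != 0 by move: hfg; rewrite minorF tofrac_eq0.
  have [c [hD hp]] := two_generic hK Dn0 p0n0.
  have [hr _] := hd_rank hlie (hgen _ hp).
  by rewrite -hr; apply: (rank_minor (f := f) (g := g)); rewrite -minorE.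
have [f [g hfg]] := minor_of_rank (evM br B c1).
rewrite -hr1; apply: (rank_minor (f := f) (g := g)).
rewrite minorF tofrac_eq0; apply: contraNneq hfg => h.
by rewrite -minorE h /evh meval0.
Qed.


Lemma fF_add V1 V2 : fF (V1 + V2) = fF V1 + fF V2.
Proof.
rewrite /fF -big_split /=; apply: eq_bigr => i _.
by rewrite mxE pullfracD // mulrDr.
Qed.

Lemma fF_sumr (I : finType) (a : I -> F) (A : I -> 'rV[F]_n) :
  fF (\sum_i a i *: A i) = \sum_i pullfrac B (a i) * fF (A i).
Proof. exact: fF_sum. Qed.

Lemma fF_scale a V : fF (a *: V) = pullfrac B a * fF V.
Proof. by rewrite -[a *: V]addr0 fF_lin fF0 addr0. Qed.

Hypothesis hm : (0 < m)%N.

Lemma part2 s : generic_St_dim br B s -> Lh_has_dim br B (s - m + 1).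
Proof.
case=> p0 [p0n0 hgen].
have [hrk hsn] := rank_MF p0n0 hgen.
set W := kermx MF.
have rW : \rank W = s by rewrite mxrank_ker hrk subKn.
have BW : (BF <= W)%MS by rewrite sub_kermx BF_ker.
have rBF : \rank BF = m by rewrite mxrank_map; exact/eqP.
set C0 := (W :\: BF)%MS.
have capC0 : (C0 :&: BF)%MS = 0 := capmx_diff W BF.
have C0W : (C0 <= W)%MS := diffmxSl W BF.
have WC0 : (W <= C0 + BF)%MS.
  rewrite -{1}(addsmx_diff_cap_eq W BF); exact: addsmxS (submx_refl _) (capmxSr _ _).
have rC0 : \rank C0 = (s - m)%N.
  have := mxrank_sum_cap C0 BF; rewrite capC0 mxrank0 addn0 rBF.
  have -> : \rank (C0 + BF)%MS = s.
    rewrite -rW; apply/eqP; rewrite eqn_leq !mxrankS //.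
    by rewrite addsmx_sub C0W BW.
  by move=> ->; rewrite addnK.
set C := castmx (rC0, erefl n) (row_base C0).
have hCfree : row_free C by rewrite row_free_castmx row_base_free.
have hCC0 : (C :=: C0)%MS := eqmx_trans (eqmx_cast _ _) (eq_row_base _).
set b0 := Ordinal hm.
set y0 := fF (row b0 BF).
have y0E : y0 = (pull 'X_b0)%:F by rewrite /y0 fF_rowBF.
have y0n0 : y0 != 0 by rewrite y0E tofrac_eq0 pull_neq0 // mpolyXU_neq0.
pose fs (k : 'I_(s - m + 1)) := match split k with inl j => fF (row j C) | inr _ => y0 end.
have fsl j : fs (lshift 1 j) = fF (row j C) by rewrite /fs (unsplitK (inl _ j)).
have fsr : fs (rshift (s - m) ord0) = y0 by rewrite /fs (unsplitK (inr _ ord0)).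
exists fs; split; [|split].
- move=> k; rewrite /fs; case: (split k) => [j|_]; apply/Lh_ker.
    exists (row j C); split => //; apply/eqP; rewrite -sub_kermx.
    by rewrite (submx_trans (row_sub j C)) // hCC0.
  exists (row b0 BF); split => //; apply/eqP; rewrite -sub_kermx.
  exact: submx_trans (row_sub b0 BF) BW.
- move=> a; rewrite big_split_ord /= big_ord1.
  under eq_bigr do rewrite fsl.
  rewrite fsr.
  set a1 := fun j => a (lshift 1 j); set a0 := a (rshift (s - m) ord0).
  move=> ha.
  set u := \sum_j a1 j *: row j C.
  have hV : fF (u + a0 *: row b0 BF) = 0.
    by rewrite fF_add fF_sumr fF_scale; exact: ha.
  have uB : (u <= BF)%MS.
    have := fF_ker hV => hVB.
    rewrite -[u](addrK (a0 *: row b0 BF)) -scaleNr.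
    by apply: addmx_sub => //; apply: scalemx_sub; exact: row_sub.
  have uE : u = (\row_j a1 j) *m C.
    by rewrite mulmx_sum_row; apply: eq_bigr => j _; rewrite mxE.
  have u0 : u = 0.
    apply/eqP; rewrite -submx0 -capC0 sub_capmx uB andbT.
    by rewrite uE -hCC0 submxMl.
  have a1z : \row_j a1 j = 0.
    by apply: (row_free_inj hCfree); rewrite mul0mx -uE.
  have a10 j : a1 j = 0 by have := congr1 (fun M : 'M[F]_(1, s - m) => M 0 j) a1z; rewrite !mxE.
  have a00 : a0 = 0.
    apply: (pullfrac_eq0 hK hB); apply/eqP.
    move: ha; rewrite big1 ?add0r => [/eqP|j _]; last by rewrite (a10 j : a (lshift 1 j) = 0) pullfrac0 // mul0r.
    by rewrite mulf_eq0 (negbTE y0n0) orbF.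
  move=> k; rewrite -(splitK k); case: (split k) => [j|j] /=.
    exact: a10.
  by rewrite (ord1 j).
- move=> f /Lh_ker [V [hV ->]].
  have hVW : (V <= W)%MS by rewrite sub_kermx hV.
  have : (V <= C + BF)%MS.
    apply: (submx_trans hVW); apply: (submx_trans WC0).
    by apply: addsmxS (submx_refl _); rewrite hCC0.
  case/sub_addsmxP => -[u1 u2] /= ->.
  pose a0 := \sum_j u2 0 j * (('X_j)%:F / ('X_b0)%:F).
  exists (fun k => match split k with inl j => u1 0 j | inr _ => a0 end).
  rewrite big_split_ord /= big_ord1 (unsplitK (inr _ ord0)) fsr.
  under [in RHS]eq_bigr do rewrite fsl (unsplitK (inl _ _)).
  rewrite fF_add !mulmx_sum_row !fF_sumr; congr (_ + _).
  rewrite pullfrac_sum // mulr_suml; apply: eq_bigr => j _.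
  rewrite fF_rowBF pullfracM // pullfrac_frac // ?mpolyXU_neq0 // y0E -mulrA divfK //.
  by rewrite tofrac_eq0 pull_neq0 // mpolyXU_neq0.
Qed.

End PartF.

Unset Implicit Arguments.
Set Strict Implicit.

Theorem lemma5 (K : fieldType) (n m : nat)
  (br : 'rV[K]_n -> 'rV[K]_n -> 'rV[K]_n) (B : 'M[K]_(m, n)) :
  [pchar K] =i pred0 ->
  is_lie_bracket br ->
  row_free B ->
  (0 < m)%N ->
  is_comm_ideal br B ->
  (exists s, generic_St_dim br B s) /\
  (forall s, generic_St_dim br B s -> Lh_has_dim br B (s - m + 1)).
Proof.
move=> hK hlie hB hm hI; split; first exact: part1.
move=> s; exact: part2.
Qed.
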